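(* Let $(X,\tau)$ be a real Hausdorff extended locally convex space with finest locally convex topology $\tau_F$, and let $A\subseteq X$ be such that both $A$ and its complement $A^c=X\setminus A$ are convex. Then the following are equivalent: (i) $\mathrm{core}(A^c)=A^c$ and $A$ is closed in $(X,\tau)$; (ii) $A$ is closed in $(X,\tau_F)$.
   Context: An extended seminorm on a real vector space $X$ is a map $\rho:X\to[0,\infty]$ with $\rho(\alpha x)=|\alpha|\rho(x)$ and $\rho(x+y)\le\rho(x)+\rho(y)$. An extended locally convex space $(X,\tau)$ is a vector space with the topology induced by a family $\{\rho_i\}$ of extended seminorms (neighborhood base at $x_0$: $\{x:\max_{i\in J}\rho_i(x-x_0)<\varepsilon\}$, $J$ finite, $\varepsilon>0$). A locally convex topology is one induced in this way by finite-valued seminorms. The finest locally convex topology $\tau_F$ of $(X,\tau)$ is the locally convex topology on $X$ with $\tau_F\subseteq\tau$ such that every locally convex topology $\sigma\subseteq\tau$ on $X$ satisfies $\sigma\subseteq\tau_F$. For $B\subseteq X$, $a\in\mathrm{core}(B)$ means: for every $x\in X$ there is $\delta_x>0$ with $a+tx\in B$ for all $0\le t\le\delta_x$. *)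

(* Defs.v *)
From HB Require Import structures.
From mathcomp Require Import all_boot all_order all_algebra.
From mathcomp Require Import boolp classical_sets reals constructive_ereal.
Set Implicit Arguments. Unset Strict Implicit. Unset Printing Implicit Defensive.
Import Order.TTheory GRing.Theory Num.Theory.
Local Open Scope classical_set_scope.
Local Open Scope ring_scope.

Section Defs.
Variables (R : realType) (X : lmodType R).

Definition ext_seminorm (rho : X -> \bar R) : Prop :=
  (forall x, (0 <= rho x)%E) /\
  (forall (a : R) (x : X), rho (a *: x) = (`|a|%:E * rho x)%E) /\
  (forall x y : X, (rho (x + y)%R <= rho x + rho y)%E).

Definition maxsn (I : Type) (rho : I -> X -> \bar R) (J : seq I) (x : X) : \bar R :=
  \big[Order.max/0%E]_(i <- J) rho i x.

Definition eopen (I : Type) (rho : I -> X -> \bar R) : set (set X) :=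
  [set U | forall x0, U x0 -> exists (J : seq I) (eps : R), 0 < eps /\
      [set x | (maxsn rho J (x - x0)%R < eps%:E)%E] `<=` U].

Definition closed_in (T : set (set X)) (A : set X) : Prop := T (~` A).

Definition hausdorff_top (T : set (set X)) : Prop :=
  forall x y : X, x <> y -> exists U V, T U /\ T V /\ U x /\ V y /\ U `&` V = set0.

Definition lc_topology (T : set (set X)) : Prop :=
  exists (J : Type) (p : J -> X -> \bar R),
    (forall j, ext_seminorm (p j)) /\ (forall j x, p j x \is a fin_num) /\
    T = eopen p.

Definition finest_lc_top (tau tauF : set (set X)) : Prop :=
  lc_topology tauF /\ tauF `<=` tau /\
  (forall sigma, lc_topology sigma -> sigma `<=` tau -> sigma `<=` tauF).

Definition convex_set (A : set X) : Prop :=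
  forall x y (t : R), A x -> A y -> 0 <= t <= 1 -> A (t *: x + (1 - t) *: y).

Definition core (B : set X) : set X :=
  [set a | forall x, exists2 d : R, 0 < d & forall t : R, 0 <= t <= d -> B (a + t *: x)].

End Defs.

(* Main.v *)
Require Import Defs.
From HB Require Import structures.
From mathcomp Require Import all_boot all_order all_algebra.
From mathcomp Require Import boolp classical_sets reals constructive_ereal.
From mathcomp Require Import ring lra.
Import Order.TTheory GRing.Theory Num.Theory.
Local Open Scope classical_set_scope.
Local Open Scope ring_scope.

Section Aux.
Set Implicit Arguments. Unset Strict Implicit.

Variables (R : realType) (X : lmodType R).

Lemma maxsn_lt (I : Type) (rho : I -> X -> \bar R) J x (e : \bar R) :
  (maxsn rho J x < e)%E <-> ((0 < e)%E /\ forall i, List.In i J -> (rho i x < e)%E).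
Proof.
rewrite /maxsn; elim: J => [|j J IH].
  by rewrite big_nil; split=> [h|[h _]] //; split=> // i [].
rewrite big_cons gt_max; split.
- move=> /andP[h1 /IH [h2 h3]]; split=> // i /= [<-|]; [done|exact: h3].
- move=> [h0 h]; apply/andP; split; first by apply: h; left.
  by apply/IH; split=> // i Hi; apply: h; right.
Qed.

Lemma semN (p : X -> \bar R) : ext_seminorm p -> forall x, p (- x) = p x.
Proof.
move=> [_ [hs _]] x; rewrite -scaleN1r hs normrN normr1 mul1e //.
Qed.


Lemma fin_common_d (I : Type) (p : I -> X -> \bar R) (hp : forall i, ext_seminorm (p i))
  (hf : forall i x, p i x \is a fin_num) (J : seq I) (x : X) (eps : R) : 0 < eps ->
  exists2 d : R, 0 < d & forall t : R, 0 <= t <= d ->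
     forall i, List.In i J -> (p i (t *: x) < eps%:E)%E.
Proof.
move=> e0; elim: J => [|j J [d' d'0 IH]].
  by exists 1 => // t _ i [].
set c := fine (p j x).
have pc : p j x = c%:E by rewrite fineK.
have c0 : 0 <= c by rewrite -lee_fin -pc; case: (hp j).
pose dj := eps / (2 * (c + 1)).
have dj0 : 0 < dj by rewrite /dj divr_gt0 // mulr_gt0 // ltr_wpDl.
exists (Order.min dj d'); first by rewrite lt_min dj0 d'0.
move=> t /andP[t0]; rewrite le_min => /andP[tj td] i /= [<-|Hi]; last first.
  by apply: IH => //; rewrite t0 td.
case: (hp j) => _ [hs _]; rewrite hs pc -EFinM lte_fin ger0_norm //.
have h1 : dj * (c + 1) = eps / 2 by rewrite /dj; field; lra.
have h2 : t * c <= t * (c + 1) by rewrite ler_wpM2l //; lra.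
have h3 : t * (c + 1) <= dj * (c + 1) by rewrite ler_wpM2r //; lra.
lra.
Qed.

End Aux.

Lemma my_le_eps (R : realType) (a b : R) : (forall e, 0 < e -> a <= b + e) -> a <= b.
Proof.
move=> H; rewrite leNgt; apply/negP => hab.
have := H ((a - b) / 2); lra.
Qed.

Section Mink.
Variables (R : realType) (X : lmodType R) (U : set X).
Hypothesis U0 : U 0.
Hypothesis Ucvx : forall y z (t : R), U y -> U z -> 0 <= t <= 1 -> U (t *: y + (1 - t) *: z).
Hypothesis Usym : forall z, U z -> U (- z).
Hypothesis Uabs : forall x, exists2 l : R, 0 < l & U (l^-1 *: x).

Definition SS (x : X) := [set l : R | 0 < l /\ U (l^-1 *: x)].
Definition mink (x : X) : R := inf (SS x).

Lemma SS_ne x : SS x !=set0.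
Proof. by case: (Uabs x) => l l0 Ul; exists l. Qed.

Lemma SS_lb x : has_lbound (SS x).
Proof. by exists 0 => l [l0 _]; apply: ltW. Qed.

Lemma mink_ge0 x : 0 <= mink x.
Proof. by apply: lb_le_inf; [exact: SS_ne | move=> l [l0 _]; apply: ltW]. Qed.

Lemma mink_le x l : SS x l -> mink x <= l.
Proof. by move=> h; apply: ge_inf => //; exact: SS_lb. Qed.

Lemma SS_up x l l' : SS x l -> l <= l' -> SS x l'.
Proof.
move=> [l0 Ul] ll'; have l'0 : 0 < l' by apply: lt_le_trans ll'.
split => //.
have := @Ucvx _ _ (l / l') Ul U0; rewrite scaler0 addr0 scalerA.
have -> : l / l' * l^-1 = l'^-1 by field; apply/andP; split; apply/lt0r_neq0.
apply; apply/andP; split; first by rewrite divr_ge0 // ltW.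
by rewrite ler_pdivrMr // mul1r.
Qed.

Lemma mink_lt x r : mink x < r -> SS x r.
Proof.
move=> /(inf_lt (SS_ne x)) [l Sl lr]; apply: SS_up Sl _; exact: ltW.
Qed.

Lemma SS_scale x c l : 0 < c -> SS x l -> SS (c *: x) (c * l).
Proof.
move=> c0 [l0 Ul]; split; first by rewrite mulr_gt0.
rewrite scalerA; have -> : (c * l)^-1 * c = l^-1 by field; apply/andP; split; apply/lt0r_neq0.
done.
Qed.

Lemma SS_neg x l : SS x l -> SS (- x) l.
Proof. by move=> [l0 Ul]; split => //; rewrite scalerN; apply: Usym. Qed.

Lemma mink_neg x : mink (- x) = mink x.
Proof.
rewrite /mink; congr inf; apply/seteqP; split => l Hl.
  by rewrite -[x]opprK; apply: SS_neg.
exact: SS_neg.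
Qed.

Lemma mink_pscale c x : 0 < c -> mink (c *: x) = c * mink x.
Proof.
move=> c0; apply/eqP; rewrite eq_le; apply/andP; split.
  rewrite -ler_pdivrMl //; apply: lb_le_inf; first exact: SS_ne.
  move=> l Sl; rewrite ler_pdivrMl //; apply: mink_le; exact: SS_scale.
apply: lb_le_inf; first exact: SS_ne.
move=> l Sl; rewrite -ler_pdivlMl //.
have ci : 0 < c^-1 by rewrite invr_gt0.
have := @SS_scale (c *: x) c^-1 l ci Sl.
rewrite scalerA mulVf ?scale1r; last exact: lt0r_neq0.
by move/mink_le; rewrite mulrC.
Qed.

Lemma mink0 : mink 0 = 0.
Proof.
apply/eqP; rewrite eq_le mink_ge0 andbT; apply: my_le_eps => e e0.
by rewrite add0r; apply: mink_le; split => //; rewrite scaler0.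
Qed.

Lemma mink_scale a x : mink (a *: x) = `|a| * mink x.
Proof.
case: (ltgtP a 0) => ha.
- rewrite ltr0_norm // -mink_pscale ?oppr_gt0 // scaleNr mink_neg //.
- by rewrite gtr0_norm // mink_pscale.
- by rewrite ha scale0r normr0 mul0r mink0.
Qed.

Lemma mink_tri x y : mink (x + y) <= mink x + mink y.
Proof.
apply: my_le_eps => e e0.
have [l10 U1] : SS x (mink x + e / 2) by apply: mink_lt; lra.
have [l20 U2] : SS y (mink y + e / 2) by apply: mink_lt; lra.
have -> : mink x + mink y + e = (mink x + e / 2) + (mink y + e / 2) by field.
apply: mink_le; split; first lra.
set l1' := mink x + e / 2 in l10 U1 *; set l2' := mink y + e / 2 in l20 U2 *.
have := @Ucvx _ _ (l1' / (l1' + l2')) U1 U2.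
rewrite !scalerA.
have -> : l1' / (l1' + l2') * l1'^-1 = (l1' + l2')^-1 by field; lra.
have -> : (1 - l1' / (l1' + l2')) * l2'^-1 = (l1' + l2')^-1 by field; lra.
rewrite -scalerDr; apply; apply/andP; split.
  by rewrite divr_ge0 //; lra.
rewrite ler_pdivrMr ?mul1r; lra.
Qed.

End Mink.

Lemma coef1 (R : realType) (s : R) : 0 < 1 + s -> 1 - (1 + s)^-1 = s / (1 + s).
Proof. by move=> h; field; apply: lt0r_neq0. Qed.
Lemma coef3 (R : realType) (s : R) : 0 < 1 + s -> (1 + s)^-1 + (1 + s)^-1 * s = 1.
Proof. by move=> h; field; apply: lt0r_neq0. Qed.
Lemma coef4 (R : realType) (s : R) : 0 < 1 + s -> (1 + s)^-1 * s = s / (1 + s).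
Proof. by move=> h; rewrite mulrC. Qed.

Theorem theorem3p14 (R : realType) (X : lmodType R) (I : Type)
  (rho : I -> X -> \bar R) (hrho : forall i, ext_seminorm (rho i))
  (hHaus : hausdorff_top (eopen rho))
  (tauF : set (set X)) (htauF : finest_lc_top (eopen rho) tauF)
  (A : set X) (hA : convex_set A) (hAc : convex_set (~` A)) :
  (core (~` A) = ~` A /\ closed_in (eopen rho) A) <-> closed_in tauF A.
Proof.
case: htauF => [[Jt [q [hq [hqf Heq]]]] [hsub hmax]].
split; last first.
  move=> HF; split; last exact: hsub.
  apply/seteqP; split => b Hb.
    have [d d0 Hd] := Hb 0; have := Hd 0; rewrite scale0r addr0; apply.
    by rewrite lexx ltW.
  move: HF; rewrite /closed_in Heq => HF.
  have [J [e [e0 HB]]] := HF b Hb.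
  move=> x; have [d d0 Hd] := fin_common_d hq hqf J x e0.
  exists d => // t ht; apply: HB; apply/maxsn_lt; split; first by rewrite lte_fin.
  by move=> i Hi; rewrite /= addrC addKr; apply: Hd.
move=> [Hcore Hcl].
have [[a Aa]|Ae] := pselect (exists a, (~` A) a); last first.
  rewrite /closed_in Heq => x0 Hx0; exfalso; apply: Ae; by exists x0.
have Ha : core (~` A) a by rewrite Hcore.
pose U := fun z : X => (~` A) (a + z) /\ (~` A) (a - z).
have cvxid : forall (b y z : X) (t : R),
    t *: (b + y) + (1 - t) *: (b + z) = b + (t *: y + (1 - t) *: z).
  move=> b y z t; rewrite !scalerDr addrACA -scalerDl.
  by rewrite [t + _]addrC subrK scale1r.
have U0' : U 0 by split; rewrite ?addr0 ?subr0.
have Ucvx' : forall y z (t : R), U y -> U z -> 0 <= t <= 1 -> U (t *: y + (1 - t) *: z).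
  move=> y z t [Uy1 Uy2] [Uz1 Uz2] ht; split.
    by rewrite -cvxid; exact: hAc.
  have -> : a - (t *: y + (1 - t) *: z) = a + (t *: (- y) + (1 - t) *: (- z)).
    by rewrite !scalerN opprD.
  by rewrite -cvxid; exact: hAc.
have Usym' : forall z, U z -> U (- z).
  by move=> z [h1 h2]; split; [done | rewrite opprK].
have Uabs' : forall x, exists2 l : R, 0 < l & U (l^-1 *: x).
  move=> x; have [d1 d10 H1] := Ha x; have [d2 d20 H2] := Ha (- x).
  pose m := Order.min d1 d2.
  have m0 : 0 < m by rewrite lt_min d10 d20.
  exists m^-1; first by rewrite invr_gt0.
  rewrite invrK; split.
    by apply: H1; rewrite ltW //= ge_min lexx.
  by rewrite -scalerN; apply: H2; rewrite ltW //= ge_min lexx orbT.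
pose p : X -> \bar R := fun x => (mink U x)%:E.
have hp : ext_seminorm p.
  split; first by move=> x; rewrite lee_fin; apply: mink_ge0.
  split; first by move=> c x; rewrite /p -EFinM; congr EFin; apply: mink_scale.
  by move=> x y; rewrite /p -EFinD lee_fin; apply: mink_tri.
pose sig := eopen (fun _ : unit => p).
have lcs : lc_topology sig by exists unit, (fun _ => p); split=> //; split=> //.
have sub : sig `<=` eopen rho.
  move=> V HV x0 Vx0.
  have [J' [d [d0 HB]]] := HV x0 Vx0.
  have [J [e [e0 HA]]] := Hcl a Aa.
  exists J, (e * (d / 2)); split; first by rewrite mulr_gt0 // divr_gt0.
  move=> x /maxsn_lt [_ Hx]; apply: HB; apply/maxsn_lt; split; first by rewrite lte_fin.
  move=> i _; rewrite /p lte_fin.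
  have : SS U (x - x0) (d / 2).
    split; first by rewrite divr_gt0.
    have key : forall w, (forall i, List.In i J -> (rho i w < e%:E)%E) ->
        (~` A) (a + w) /\ (~` A) (a - w).
      move=> w Hw; split; apply: HA; apply/maxsn_lt; (split; first by rewrite lte_fin).
        by move=> j Hj; rewrite /= addrC addKr; exact: Hw.
      by move=> j Hj; rewrite /= addrC addKr semN //; exact: Hw.
    apply: key => j Hj.
    have := Hx j Hj; case: (hrho j) => h0 [hs _]; rewrite hs.
    have := h0 (x - x0); case: (rho j (x - x0)) => [r| |] /=.
    - move=> _; rewrite -EFinM !lte_fin gtr0_norm ?invr_gt0 ?divr_gt0 // => hr.
      by rewrite mulrC ltr_pdivrMr // divr_gt0.
    - by [].
    - by [].
  move/mink_le => h; apply: le_lt_trans h _; lra.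
have open_c : sig (~` A).
  move=> x0 Ax0.
  have Hx0 : core (~` A) x0 by rewrite Hcore.
  have [s s0 Hs] := Hx0 (x0 - a).
  pose t := (1 + s)^-1; pose dl := s / (1 + s).
  have s1 : 0 < 1 + s by lra.
  exists [:: tt], dl; split; first by rewrite divr_gt0.
  move=> x /maxsn_lt [_ Hx]; have := Hx tt (or_introl erefl); rewrite /p lte_fin => Hlt.
  have [_ [Uz1 _]] := @mink_lt _ _ U U0' Ucvx' Uabs' _ _ Hlt.
  have Hy : (~` A) (x0 + s *: (x0 - a)) by apply: Hs; rewrite lexx ltW.
  have ht : 0 <= t <= 1.
    apply/andP; split; first by rewrite invr_ge0 ltW.
    by rewrite invr_le1 ?unitf_gt0 //; lra.
  have := hAc _ _ t Hy Uz1 ht.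
  have e1 : 1 - t = dl by rewrite /t /dl; apply: coef1.
  have e3 : t + t * s = 1 by rewrite /t; apply: coef3.
  have e4 : t * s = dl by rewrite /t /dl; apply: coef4.
  have e2 : t *: (x0 + s *: (x0 - a)) = x0 - dl *: a.
    by rewrite !scalerDr !scalerN !scalerA addrA -scalerDl e3 e4 scale1r.
  have e5 : (1 - t) *: (a + dl^-1 *: (x - x0)) = dl *: a + (x - x0).
    by rewrite e1 scalerDr scalerA divff ?scale1r // lt0r_neq0 // divr_gt0.
  by rewrite e2 e5 addrA subrK addrC subrK.
exact: (hmax sig lcs sub).
Qed.
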